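(* Let $\mathbf b\in\mathrm{Comp}_{p,n}$ and $\boldsymbol\lambda\in\mathcal P_{d,\mathbf b}$, let $o_{\boldsymbol\lambda}=\min\{k\ge1:\boldsymbol\lambda^{[k+t]}=\boldsymbol\lambda^{[t]}\ \forall t\}$, $p_{\boldsymbol\lambda}=p/o_{\boldsymbol\lambda}$, $n_{\boldsymbol\lambda}=n/p_{\boldsymbol\lambda}$, and $\sqrt{\boldsymbol\lambda}=(\boldsymbol\lambda^{[1]},\dots,\boldsymbol\lambda^{[o_{\boldsymbol\lambda}]})$ (the first $do_{\boldsymbol\lambda}$ components of $\boldsymbol\lambda$). Then the numbers $\gamma_{\mathbf b}(\sqrt{\boldsymbol\lambda})=\big(\ell(w_{\mathbf b})+\sum_{a=1}^p\beta(\overrightarrow{\boldsymbol\lambda^{[a]}})-\beta(\overrightarrow{\boldsymbol\lambda})\big)/p_{\boldsymbol\lambda}$ and $\alpha(\boldsymbol\lambda)=\frac12 n_{\boldsymbol\lambda}(rp-do_{\boldsymbol\lambda})-d\alpha(\mathbf b)/p_{\boldsymbol\lambda}$ are integers, and setting $$g_{\boldsymbol\lambda}=\dot\varepsilon^{\alpha(\boldsymbol\lambda)}\dot q^{\gamma_{\mathbf b}(\sqrt{\boldsymbol\lambda})}(\dot Q_1\cdots\dot Q_d)^{n_{\boldsymbol\lambda}(p-1)}\prod_{(i,j,s)\in[\sqrt{\boldsymbol\lambda}]}\ \prod_{1\le t\le do_{\boldsymbol\lambda}}\ \prod_{\substack{0\le a<p_{\boldsymbol\lambda}\\ a\ne0\text{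 if }p_t=p_s}}\big(\dot\varepsilon^{ao_{\boldsymbol\lambda}}h^{\boldsymbol\lambda}_{ij}(s,t)-1\big)$$ one has $g_{\boldsymbol\lambda}\in\mathbb Z[\dot\varepsilon,\dot q^{\pm1},\dot Q_1^{\pm1},\dots,\dot Q_d^{\pm1}]$ and $$f_{\boldsymbol\lambda}=\dot\varepsilon^{\frac12 do_{\boldsymbol\lambda}n(1-p_{\boldsymbol\lambda})}\,g_{\boldsymbol\lambda}^{\,p_{\boldsymbol\lambda}}.$$
   Context: Setting: $p>1$, $d\ge1$, $n\ge3$, $r=pd$; $\mathcal F=\mathbb Q(\dot\varepsilon,\dot q,\dot Q_1,\dots,\dot Q_d)$, $\dot\varepsilon\in\mathbb C$ a primitive $p$th root of unity, $\dot q,\dot Q_i$ indeterminates. $\mathbf b=(b_1,\dots,b_p)$ is a composition of $n$ into $p$ nonnegative parts, $\alpha(\mathbf b)=\sum_iib_i$, $\ell(w_{\mathbf b})=\sum_{i<j}b_ib_j$. For an $r$-multipartition $\boldsymbol\lambda=(\lambda^{(1)},\dots,\lambda^{(r)})$, $\boldsymbol\lambda^{[t]}=(\lambda^{(dt-d+1)},\dots,\lambda^{(dt)})$ with $\boldsymbol\lambda^{[t+kp]}=\boldsymbol\lambda^{[t]}$; $\mathcal P_{d,\mathbf b}$ is the set of $\boldsymbol\lambda$ with $|\boldsymbol\lambda^{[t]}|=b_t$. $f_{\boldsymbol\lambda}$ is the explicit element $f_{\boldsymbol\lambda}=\dot\varepsilon^{\frac12 rn(p-1)-d\alpha(\mathbf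 b)}\dot q^{\ell(w_{\mathbf b})-\beta(\overrightarrow{\boldsymbol\lambda})+\sum_a\beta(\overrightarrow{\boldsymbol\lambda^{[a]}})}(\dot Q_1\cdots\dot Q_d)^{n(p-1)}\prod_{(i,j,s)\in[\boldsymbol\lambda]}\prod_{1\le t\le r,\,p_t\ne p_s}(h^{\boldsymbol\lambda}_{ij}(s,t)-1)$, which is the scalar by which the central element $z_{\mathbf b}$ of $\mathcal H_{d,\mathbf b}$ acts on the Specht module $S_{\mathbf b}(\boldsymbol\lambda)$. Notation: $\beta(\lambda)=\sum_i(i-1)\lambda_i$ for a partition; $\overrightarrow{\boldsymbol\mu}$ is the partition formed by all parts of all components of $\boldsymbol\mu$ sorted decreasingly; $[\boldsymbol\mu]=\{(i,j,s):1\le j\le\mu^{(s)}_i\}$; $h_{ij}(\lambda,\mu)=\lambda_i-i+\mu'_j-j+1$; each $1\le s\le r$ is written $s=d(p_s-1)+d_s$ with $1\le p_s\le p$, $1\le d_s\le d$; $h^{\boldsymbol\lambda}_{ij}(s,t)=\dot\varepsilon^{p_s-p_t}\dot q^{h_{ij}(\lambda^{(s)},\lambda^{(t)})}\dot Q_{d_s}\dot Q_{d_t}^{-1}$. *)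

(* Defs.v *)
From HB Require Import structures.
From mathcomp Require Import all_boot all_order all_algebra.
Set Implicit Arguments. Unset Strict Implicit. Unset Printing Implicit Defensive.
Import Order.TTheory GRing.Theory Num.Theory.
Local Open Scope ring_scope.

Definition is_partition (mu : seq nat) : bool :=
  sorted (fun x y => (y <= x)%N) mu && all (fun x => (0 < x)%N) mu.

Definition part (mu : seq nat) (i : nat) : nat := nth 0%N mu i.-1.

Definition conjpart (mu : seq nat) (j : nat) : nat := count (fun x => (j <= x)%N) mu.

Definition beta (mu : seq nat) : nat := \sum_(i < size mu) (i * nth 0%N mu i)%N.

Definition comp (lam : seq (seq nat)) (s : nat) : seq nat := nth [::] lam s.-1.

(* lambda^{[t]} (t >= 1), with lambda^{[t+kp]} = lambda^{[t]} *)
Definition block (p d : nat) (lam : seq (seq nat)) (t : nat) : seq (seq nat) :=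
  take d (drop (d * (t.-1 %% p)) lam).

Definition arrow (mu : seq (seq nat)) : seq nat := sort (fun x y => (y <= x)%N) (flatten mu).

Definition msize (mu : seq (seq nat)) : nat := sumn (map sumn mu).

Definition bpart (b : seq nat) (i : nat) : nat := nth 0%N b i.-1.

Definition is_comp (p n : nat) (b : seq nat) : bool := (size b == p) && (sumn b == n).

Definition in_Pdb (p d : nat) (b : seq nat) (lam : seq (seq nat)) : bool :=
  [&& size lam == (p * d)%N, all is_partition lam &
      all (fun t => msize (block p d lam t) == bpart b t) (iota 1 p)].

Definition alphab (p : nat) (b : seq nat) : nat := \sum_(1 <= i < p.+1) (i * bpart b i)%N.

Definition ellw (p : nat) (b : seq nat) : nat :=
  \sum_(1 <= i < p.+1) \sum_(i.+1 <= j < p.+1) (bpart b i * bpart b j)%N.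

(* o_lambda = min{k >= 1 : lambda^{[k+t]} = lambda^{[t]} for all t}.
   Since k = p always works and blocks are p-periodic in t, it suffices to
   search k in 1..p and check t in 1..p. *)
Definition olam (p d : nat) (lam : seq (seq nat)) : nat :=
  (find (fun k => all (fun t => block p d lam (k + t) == block p d lam t) (iota 1 p))
        (iota 1 p)).+1.

Definition plam (p d : nat) (lam : seq (seq nat)) : nat := (p %/ olam p d lam)%N.
Definition nlam (p d n : nat) (lam : seq (seq nat)) : nat := (n %/ plam p d lam)%N.

Definition sqrtlam (p d : nat) (lam : seq (seq nat)) : seq (seq nat) :=
  take (d * olam p d lam) lam.

Definition sumbeta (p d : nat) (lam : seq (seq nat)) : nat :=
  \sum_(1 <= a < p.+1) beta (arrow (block p d lam a)).

Definition gammab (p d : nat) (b : seq nat) (lam : seq (seq nat)) : rat :=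
  ((ellw p b)%:R + (sumbeta p d lam)%:R - (beta (arrow lam))%:R) / (plam p d lam)%:R.

Definition alphalam (p d n : nat) (b : seq nat) (lam : seq (seq nat)) : rat :=
  2%:R^-1 * (nlam p d n lam)%:R * ((p * d * p)%:R - (d * olam p d lam)%:R)
  - (d * alphab p b)%:R / (plam p d lam)%:R.

(* s = d(p_s - 1) + d_s with 1 <= p_s <= p, 1 <= d_s <= d *)
Definition ps (d s : nat) : nat := (s.-1 %/ d).+1.
Definition ds (d s : nat) : nat := (s.-1 %% d).+1.

Definition hook (la mu : seq nat) (i j : nat) : int :=
  (part la i)%:Z - i%:Z + (conjpart mu j)%:Z - j%:Z + 1.

Section Field.
Variable K : fieldType.

Definition hl (d : nat) (eps q : K) (Q : nat -> K) (lam : seq (seq nat)) (i j s t : nat) : K :=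
  eps ^ ((ps d s)%:Z - (ps d t)%:Z) * q ^ (hook (comp lam s) (comp lam t) i j)
  * Q (ds d s) * (Q (ds d t))^-1.

Definition cellprod (mu : seq (seq nat)) (F : nat -> nat -> nat -> K) : K :=
  \prod_(1 <= s < (size mu).+1)
    \prod_(1 <= i < (size (comp mu s)).+1)
      \prod_(1 <= j < (part (comp mu s) i).+1) F i j s.

Definition Qprod (d : nat) (Q : nat -> K) : K := \prod_(1 <= i < d.+1) Q i.

Definition flam (p d n : nat) (eps q : K) (Q : nat -> K) (b : seq nat)
    (lam : seq (seq nat)) : K :=
  let r := (p * d)%N in
  eps ^ (((r * n * (p - 1))./2)%:Z - (d * alphab p b)%:Z)
  * q ^ ((ellw p b)%:Z - (beta (arrow lam))%:Z + (sumbeta p d lam)%:Z)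
  * Qprod d Q ^+ (n * (p - 1))
  * cellprod lam (fun i j s =>
      \prod_(1 <= t < r.+1 | ps d t != ps d s) (hl d eps q Q lam i j s t - 1)).

(* g_lambda; the integer exponents alpha(lambda), gamma_b(sqrt lambda) are
   taken as the numerators of the rationals alphalam, gammab (which are
   asserted to be integers in the theorem) *)
Definition glam (p d n : nat) (eps q : K) (Q : nat -> K) (b : seq nat)
    (lam : seq (seq nat)) : K :=
  let o := olam p d lam in
  let pl := plam p d lam in
  eps ^ numq (alphalam p d n b lam) * q ^ numq (gammab p d b lam)
  * Qprod d Q ^+ (nlam p d n lam * (p - 1))
  * cellprod (sqrtlam p d lam) (fun i j s =>
      \prod_(1 <= t < (d * o).+1)
        \prod_(0 <= a < pl | (ps d t == ps d s) ==> (a != 0)%N)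
          (eps ^+ (a * o) * hl d eps q Q lam i j s t - 1)).

(* the subring Z[eps, q^{+-1}, Q_1^{+-1}, ..., Q_d^{+-1}] of K *)
Inductive inLaurent (d : nat) (eps q : K) (Q : nat -> K) : K -> Prop :=
  | inL_one : inLaurent d eps q Q 1
  | inL_eps : inLaurent d eps q Q eps
  | inL_q : inLaurent d eps q Q q
  | inL_qinv : inLaurent d eps q Q q^-1
  | inL_Q i : (1 <= i <= d)%N -> inLaurent d eps q Q (Q i)
  | inL_Qinv i : (1 <= i <= d)%N -> inLaurent d eps q Q (Q i)^-1
  | inL_opp x : inLaurent d eps q Q x -> inLaurent d eps q Q (- x)
  | inL_add x y : inLaurent d eps q Q x -> inLaurent d eps q Q y -> inLaurent d eps q Q (x + y)
  | inL_mul x y : inLaurent d eps q Q x -> inLaurent d eps q Q y -> inLaurent d eps q Q (x * y).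

End Field.

(* Main.v *)
From Pilot Require Import Defs.
From HB Require Import structures.
From mathcomp Require Import all_boot all_order all_algebra.
From Stdlib Require Import Lia ArithRing.
Import Order.TTheory GRing.Theory Num.Theory.
Import Pilot.Defs.

Ltac natlia := intros; repeat match goal with
 | H : is_true (leq _ _) |- _ => move/ssrnat.leP: H => H
 | H : is_true (@eq_op _ _ _) |- _ => move/eqP: H => H
 | H : is_true (negb (@eq_op _ _ _)) |- _ => move/eqP: H => H
 | |- is_true (leq _ _) => apply/ssrnat.leP
 | |- is_true (@eq_op _ _ _) => apply/eqP
 | |- is_true (negb (@eq_op _ _ _)) => apply/eqP
 end; unfold addn, muln, subn, addn_rec, muln_rec, subn_rec in *; lia.

Section Per.
Variables (p d : nat) (lam : seq (seq nat)).
Hypothesis p_gt0 : (0 < p)%N.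

Definition Pk k := all (fun t => block p d lam (k + t) == block p d lam t) (iota 1 p).

Lemma block_eq t t' : (t.-1 %% p = t'.-1 %% p)%N -> block p d lam t = block p d lam t'.
Proof. by rewrite /block => ->. Qed.

Lemma Pk_all k t : Pk k -> (0 < t)%N -> block p d lam (k + t) = block p d lam t.
Proof.
move=> /allP Hk t0.
set t' := (t.-1 %% p).+1.
have ht' : t' \in iota 1 p.
  by rewrite mem_iota /t' add1n !ltnS ltn_pmod.
have e1 : block p d lam t = block p d lam t' by apply: block_eq; rewrite /t' /= modn_mod.
have e2 : block p d lam (k + t) = block p d lam (k + t').
  apply: block_eq; rewrite /t' !addnS /= -!subn1 -!addnBA //.
  by rewrite subn1 /= modnDmr.
rewrite e1 e2; exact/eqP/Hk.
Qed.

Lemma Pp : Pk p.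
Proof.
apply/allP=> t; rewrite mem_iota => /andP[t1 _]; apply/eqP/block_eq.
by rewrite -(prednK t1) addnS /= modnDl.
Qed.

Definition o := olam p d lam.

Lemma has_Pk : has Pk (iota 1 p).
Proof. apply/hasP; exists p; last exact: Pp. by rewrite mem_iota add1n ltnS p_gt0 leqnn. Qed.

Lemma o_gt0 : (0 < o)%N. Proof. by []. Qed.
Lemma o_le : (o <= p)%N.
Proof. have := has_Pk. rewrite has_find size_iota => h; exact h. Qed.
Lemma Po : Pk o.
Proof.
have := nth_find 0 has_Pk. rewrite nth_iota; last by have := has_Pk; rewrite has_find size_iota.
by rewrite add1n.
Qed.
Lemma o_min k : (0 < k < o)%N -> ~~ Pk k.
Proof.
case/andP=> k0 ko.
have := @before_find _ 0 Pk (iota 1 p) k.-1.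
rewrite nth_iota; last by rewrite prednK //; apply: ltnW (leq_trans ko o_le).
rewrite add1n prednK // => ->; first by []; rewrite -ltnS; exact ko.
Qed.

Lemma per_o t : (0 < t)%N -> block p d lam (o + t) = block p d lam t.
Proof. move=> t0; exact: Pk_all Po t0. Qed.

Lemma per_oj j t : (0 < t)%N -> block p d lam (j * o + t) = block p d lam t.
Proof.
move=> t0; elim: j => [|j IH] //; rewrite mulSn -addnA per_o //.
by rewrite addn_gt0 t0 orbT.
Qed.

Lemma o_dvd : (o %| p)%N.
Proof.
apply/negPn/negP=> Hn.
have r0 : (0 < p %% o)%N by rewrite lt0n.
have H : ~~ Pk (p %% o) by apply: o_min; rewrite r0 ltn_pmod.
move/ssrbool.negP: H; apply.
apply/allP=> t; rewrite mem_iota => /andP[t1 _]; apply/eqP.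
rewrite -(per_oj (p %/ o)); last by rewrite addn_gt0 t1 orbT.
by rewrite addnA -divn_eq (@Pk_all p t Pp t1).
Qed.

End Per.

Ltac natring := unfold addn, muln, subn, addn_rec, muln_rec, subn_rec in *; ring.

Section Comp.
Variables (p d : nat) (lam : seq (seq nat)).
Hypothesis p_gt0 : (0 < p)%N.
Hypothesis d_gt0 : (0 < d)%N.
Hypothesis szlam : size lam = (p * d)%N.
Local Notation o := (olam p d lam).
Local Notation pl := (p %/ olam p d lam)%N.

Lemma p_eq : p = (pl * o)%N.
Proof. by rewrite divnK // o_dvd. Qed.

Lemma pl_gt0 : (0 < pl)%N.
Proof. by rewrite divn_gt0 // o_le. Qed.

Lemma comp_block t e : (0 < t <= p)%N -> (e < d)%N ->
  comp lam (d * t.-1 + e).+1 = nth [::] (block p d lam t) e.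
Proof.
case/andP=> t0 tp ed; rewrite /comp /block /= (nth_take _ ed) nth_drop modn_small //.
by rewrite prednK.
Qed.

Lemma comp_per s : (0 < s)%N -> (s + d * o <= p * d)%N -> comp lam (s + d * o) = comp lam s.
Proof.
move=> s0 hs.
have hdiv := divn_eq s.-1 d.
set a := s.-1 %/ d in hdiv *; set e := s.-1 %% d in hdiv.
have ed : (e < d)%N by rewrite ltn_mod.
have ha : (a + o < p)%N.
  rewrite /a addnC -divnMDl // ltn_divLR //.
  natlia.
have -> : s = (d * (a.+1).-1 + e).+1 by rewrite /= mulnC -hdiv prednK.
have -> : ((d * (a.+1).-1 + e).+1 + d * o = (d * (o + a.+1).-1 + e).+1)%N.
  rewrite addnS /=; natlia.
rewrite !comp_block //; first by rewrite per_o.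
  by apply/andP; split => //; natlia.
by apply/andP; split; [rewrite addnS | natlia].
Qed.
Lemma comp_perk s k : (0 < s <= d * o)%N -> (k < pl)%N ->
  comp lam (s + k * (d * o)) = comp lam s.
Proof.
case/andP=> s0 so; elim: k => [|k IH] hk; first by rewrite addn0.
have h2 := leq_mul hk (leqnn (d * o)).
rewrite mulSnr addnA comp_per ?IH ?(ltnW hk) //.
  by rewrite addn_gt0 s0.
have pd : (p * d = pl * (d * o))%N by rewrite {1}p_eq mulnAC mulnA.
rewrite pd; natlia.
Qed.
End Comp.

Lemma ps_shift d s k o : (0 < d)%N -> (0 < s)%N -> ps d (s + k * (d * o)) = (ps d s + k * o)%N.
Proof.
move=> d0 s0; rewrite /ps.
have -> : ((s + k * (d * o)).-1 = k * o * d + s.-1)%N by natlia.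
rewrite divnMDl //; natlia.
Qed.

Lemma ds_shift d s k o : (0 < s)%N -> ds d (s + k * (d * o)) = ds d s.
Proof.
move=> s0; rewrite /ds.
have -> : ((s + k * (d * o)).-1 = k * o * d + s.-1)%N by natlia.
by rewrite modnMDl.
Qed.

Lemma ps_bound d o s : (0 < d)%N -> (0 < s <= d * o)%N -> (0 < ps d s <= o)%N.
Proof.
move=> d0 /andP[s0 so]; rewrite /ps /= ltn_divLR //.
rewrite mulnC; natlia.
Qed.

Lemma ds_bound d s : (0 < d)%N -> (0 < ds d s <= d)%N.
Proof. by move=> d0; rewrite /ds /= ltn_mod. Qed.

Lemma big_blocks (R : Type) (idx : R) (op : Monoid.law idx) k M (F : nat -> R) :
  \big[op/idx]_(1 <= s < (k * M).+1) F s =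
  \big[op/idx]_(0 <= j < k) \big[op/idx]_(1 <= s < M.+1) F (s + j * M)%N.
Proof.
elim: k => [|k IH]; first by rewrite mul0n !big_geq.
rewrite [RHS]big_nat_recr //= (@big_cat_nat _ _ _ (k * M).+1) //=; last by rewrite ltnS leq_mul2r leqnSn orbT.
rewrite IH; congr (op _ _).
rewrite -add1n big_addn; apply: congr_big_nat => //.
natlia.
Qed.

Lemma sumn_nth (s : seq nat) : sumn s = \sum_(i < size s) nth 0 s i.
Proof. by rewrite sumnE (big_nth 0) big_mkord. Qed.

Lemma beta_cons x s : beta (x :: s) = (beta s + sumn s)%N.
Proof.
rewrite /beta /= big_ord_recl /= mul0n add0n sumn_nth -big_split /=.
by apply: eq_bigr => i _; rewrite /= mulSn addnC.
Qed.

Lemma beta_cat s1 s2 : beta (s1 ++ s2) = (beta s1 + beta s2 + size s1 * sumn s2)%N.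
Proof.
elim: s1 => [|x s1 IH] /=; first by rewrite /beta big_ord0 add0n mul0n addn0.
rewrite !beta_cons IH sumn_cat; natlia.
Qed.

Lemma bin2S n : 'C(n.+1, 2) = ('C(n, 2) + n)%N.
Proof. by rewrite binS bin1. Qed.

Lemma beta_nseq k x : beta (nseq k x) = ('C(k, 2) * x)%N.
Proof.
elim: k => [|k IH] /=; first by rewrite /beta big_ord0.
rewrite beta_cons IH sumn_nseq bin2S mulnDl; natlia.
Qed.

Lemma sumn_flat_nseq k mu : sumn (flatten (map (nseq k) mu)) = (k * sumn mu)%N.
Proof.
elim: mu => [|x mu IH] /=; first by rewrite muln0.
by rewrite sumn_cat IH sumn_nseq mulnDr mulnC.
Qed.

Lemma size_flat_nseq k (mu : seq nat) : size (flatten (map (nseq k) mu)) = (k * size mu)%N.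
Proof.
elim: mu => [|x mu IH] /=; first by rewrite muln0.
by rewrite size_cat IH size_nseq mulnS.
Qed.

Lemma beta_flat_nseq k mu :
  beta (flatten (map (nseq k) mu)) = (k * k * beta mu + 'C(k, 2) * sumn mu)%N.
Proof.
elim: mu => [|x mu IH] /=; first by rewrite /beta /= !big_ord0 !muln0.
rewrite beta_cat beta_nseq IH size_nseq sumn_flat_nseq beta_cons; natlia.
Qed.

Lemma count_flat_nseq k mu (P : pred nat) :
  count P (flatten (map (nseq k) mu)) = (k * count P mu)%N.
Proof.
elim: mu => [|x mu IH] /=; first by rewrite muln0.
by rewrite count_cat IH count_nseq mulnDr mulnC.
Qed.

Definition geqr : rel nat := fun x y => (y <= x)%N.

Lemma geqr_trans : transitive geqr.
Proof. by move=> x y z h1 h2; rewrite /geqr (leq_trans h2 h1). Qed.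

Lemma pw_nseq k x : pairwise geqr (nseq k x).
Proof.
elim: k => [|k IHk] //=; rewrite IHk andbT; apply/allP=> y; rewrite mem_nseq => /andP[_ /eqP ->].
exact: leqnn.
Qed.

Lemma sorted_flat_nseq k mu : sorted geqr mu -> sorted geqr (flatten (map (nseq k) mu)).
Proof.
rewrite !(sorted_pairwise geqr_trans).
elim: mu => [|x mu IH] //= /andP[hx hmu].
rewrite pairwise_cat IH // andbT; apply/andP; split.
  apply/allrelP => y z; rewrite mem_nseq => /andP[_ /eqP ->].
  case/flattenP => w /mapP[u hu ->]; rewrite mem_nseq => /andP[_ /eqP ->].
  exact: (allP hx).
exact: pw_nseq.
Qed.


Lemma sort_rep k (L1 L2 : seq nat) :
  (forall P : pred nat, count P L1 = (k * count P L2)%N) ->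
  sort (fun x y => (y <= x)%N) L1 = flatten (map (nseq k) (sort (fun x y => (y <= x)%N) L2)).
Proof.
move=> hc.
have tot : total geqr by move=> x y; rewrite /geqr orbC leq_total.
have anti : antisymmetric geqr.
  by move=> x y /andP[h1 h2]; apply/eqP; rewrite eqn_leq; apply/andP; split; [exact h2 | exact h1].
apply: (sorted_eq geqr_trans anti).
- exact: (sort_sorted tot).
- apply: sorted_flat_nseq; exact: (sort_sorted tot).
apply/permP => P.
rewrite count_flat_nseq.
have e1 : perm_eq (sort geqr L1) L1 by rewrite perm_sort.
have e2 : perm_eq (sort geqr L2) L2 by rewrite perm_sort.
by rewrite (permP e1 P) (permP e2 P) hc.
Qed.

Lemma beta_sort_rep k (L1 L2 : seq nat) :
  (forall P : pred nat, count P L1 = (k * count P L2)%N) ->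
  beta (sort (fun x y => (y <= x)%N) L1) =
  (k * k * beta (sort (fun x y => (y <= x)%N) L2) + 'C(k, 2) * sumn L2)%N.
Proof.
move=> hc; rewrite (@sort_rep k L1 L2 hc) beta_flat_nseq; congr (_ + _ * _)%N.
by apply: perm_sumn; rewrite perm_sort.
Qed.

Lemma bin2D a b : 'C(a + b, 2) = ('C(a, 2) + 'C(b, 2) + a * b)%N.
Proof.
elim: b => [|b IH]; first by rewrite addn0 bin0n muln0 !addn0.
rewrite addnS !bin2S IH mulnS; natlia.
Qed.

Lemma bin2M k m : 'C(k * m, 2) = (k * k * 'C(m, 2) + 'C(k, 2) * m)%N.
Proof.
elim: m => [|m IH]; first by rewrite ?(muln0, bin0n, addn0).
rewrite mulnS addnC bin2D IH bin2S; natlia.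
Qed.

Lemma ellw_gen (f : nat -> nat) p :
  (\sum_(1 <= i < p.+1) \sum_(i.+1 <= j < p.+1) (f i * f j)
   + \sum_(1 <= i < p.+1) 'C(f i, 2) = 'C(\sum_(1 <= i < p.+1) f i, 2))%N.
Proof.
elim: p => [|p IH]; first by rewrite !big_geq.
rewrite [in RHS](big_nat_recr p.+1) //.
rewrite [\sum_(1 <= i < p.+2) 'C(f i, 2)](big_nat_recr p.+1) //.
rewrite [\sum_(1 <= i < p.+2) _](big_nat_recr p.+1) //= [\sum_(p.+2 <= j < p.+2) _]big_geq // addn0.
rewrite (@eq_big_nat _ _ _ 1 p.+1 _ (fun i => \sum_(i.+1 <= j < p.+1) (f i * f j) + f i * f p.+1)%N); last first.
  by move=> i /andP[_ hi]; rewrite big_nat_recr.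
rewrite big_split /= bin2D -IH -big_distrl /=; natlia.
Qed.

Lemma sum_comp (L : seq (seq nat)) (f : seq nat -> nat) :
  sumn (map f L) = \sum_(1 <= s < (size L).+1) f (comp L s).
Proof.
rewrite sumnE big_map (big_nth [::]) big_add1 /=.
by apply: eq_bigr.
Qed.

Lemma msize_take (L : seq (seq nat)) d j :
  msize (take (d * j) L) = \sum_(1 <= t < j.+1) msize (take d (drop (d * t.-1) L)).
Proof.
elim: j => [|j IH]; first by rewrite muln0 take0 big_geq.
by rewrite big_nat_recr //= mulnS addnC takeD /msize map_cat sumn_cat -IH.
Qed.

Section NatPart.
Variables (p d n : nat) (b : seq nat) (lam : seq (seq nat)).
Hypothesis p_gt0 : (0 < p)%N.
Hypothesis d_gt0 : (0 < d)%N.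
Hypothesis szlam : size lam = (p * d)%N.
Hypothesis szb : size b = p.
Hypothesis sumb : sumn b = n.
Hypothesis hb : all (fun t => msize (block p d lam t) == bpart b t) (iota 1 p).
Local Notation o := (olam p d lam).
Local Notation pl := (plam p d lam).
Local Notation sq := (sqrtlam p d lam).

Lemma pd_eq' : (p * d = pl * (d * o))%N.
Proof. by rewrite {1}(p_eq p d lam p_gt0) mulnAC mulnA. Qed.

Lemma size_sqrt' : size sq = (d * o)%N.
Proof.
rewrite /sqrtlam size_take szlam; case: ifP => // /negbT; rewrite -leqNgt => h.
by apply/eqP; rewrite eqn_leq h /= [(d * _)%N]mulnC leq_mul2r (o_le p d lam p_gt0) orbT.
Qed.

Lemma comp_sqrt' s : (s <= d * o)%N -> comp sq s = comp lam s.
Proof.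
move=> hs; rewrite /comp /sqrtlam; case: s hs => [|s] hs /=; first by rewrite nth_take // muln_gt0 d_gt0.
by rewrite nth_take.
Qed.

Lemma sum_lam (f : seq nat -> nat) : sumn (map f lam) = (pl * sumn (map f sq))%N.
Proof.
rewrite !sum_comp szlam size_sqrt' pd_eq' big_blocks.
rewrite (eq_big_nat _ _ (F2 := fun _ => \sum_(1 <= s < (d * o).+1) f (comp sq s))); last first.
  move=> j /andP[_ hj]; apply: eq_big_nat => s /andP[s0 hs].
  rewrite comp_sqrt'; last by rewrite -ltnS.
  by rewrite comp_perk // s0 -ltnS.
by rewrite sum_nat_const_nat subn0.
Qed.

Lemma count_lam (P : pred nat) : count P (flatten lam) = (pl * count P (flatten sq))%N.
Proof. by rewrite !count_flatten (sum_lam (fun x => count P x)). Qed.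

Lemma beta_arrow :
  beta (arrow lam) = (pl * pl * beta (arrow sq) + 'C(pl, 2) * msize sq)%N.
Proof.
by rewrite /arrow (@beta_sort_rep pl (flatten lam) (flatten sq) count_lam) sumn_flatten.
Qed.

Lemma bpart_block t : (0 < t <= p)%N -> bpart b t = msize (block p d lam t).
Proof.
move=> /andP[t0 tp]; apply/esym/eqP; apply: (allP hb).
by rewrite mem_iota t0 add1n ltnS.
Qed.

Lemma pl_gt0' : (0 < pl)%N.
Proof. exact: (pl_gt0 p d lam p_gt0). Qed.

Lemma bpart_per i k : (0 < i <= o)%N -> (k < pl)%N -> bpart b (i + k * o) = bpart b i.
Proof.
move=> /andP[i0 io] hk.
have h2 := leq_mul hk (leqnn o).
have pe : p = (pl * o)%N := p_eq p d lam p_gt0.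
rewrite !bpart_block; first by rewrite addnC per_oj.
  by rewrite i0 /=; apply: leq_trans (o_le p d lam p_gt0).
rewrite addn_gt0 i0 /=; rewrite [X in (_ <= X)%N]pe; move: h2; rewrite mulSn; natlia.
Qed.

Lemma sum_split_p (F : nat -> nat) :
  (\sum_(1 <= i < p.+1) F i = \sum_(0 <= k < pl) \sum_(1 <= i < o.+1) F (i + k * o))%N.
Proof.
have -> : (p.+1 = (pl * o).+1)%N by rewrite -(p_eq p d lam p_gt0).
exact: big_blocks.
Qed.

Lemma sum_bper (G : nat -> nat -> nat) :
  (\sum_(1 <= i < p.+1) G i (bpart b i) = \sum_(0 <= k < pl) \sum_(1 <= i < o.+1) G (i + k * o)%N (bpart b i))%N.
Proof.
rewrite sum_split_p; apply: eq_big_nat => k /andP[_ hk]; apply: eq_big_nat => i /andP[i0 io].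
by rewrite bpart_per // i0 -ltnS.
Qed.

Definition mm := (\sum_(1 <= i < o.+1) bpart b i)%N.
Definition AB := (\sum_(1 <= i < o.+1) i * bpart b i)%N.
Definition CC := (\sum_(1 <= i < o.+1) 'C(bpart b i, 2))%N.
Definition SB := (\sum_(1 <= a < o.+1) beta (arrow (block p d lam a)))%N.

Lemma sumn_bpart : sumn b = (\sum_(1 <= i < p.+1) bpart b i)%N.
Proof. by rewrite sumnE (big_nth 0) big_add1 szb /=. Qed.

Lemma n_eq : n = (pl * mm)%N.
Proof.
rewrite -sumb sumn_bpart (sum_bper (fun _ x => x)) sum_nat_const_nat subn0 //.
Qed.

Lemma CC_eq : (\sum_(1 <= i < p.+1) 'C(bpart b i, 2) = pl * CC)%N.
Proof. by rewrite (sum_bper (fun _ x => 'C(x, 2))) sum_nat_const_nat subn0. Qed.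

Lemma alphab_eq : alphab p b = (pl * AB + o * mm * 'C(pl, 2))%N.
Proof.
rewrite /alphab (sum_bper (fun i x => i * x)%N).
rewrite (eq_big_nat _ _ (F2 := fun k => AB + k * (o * mm))%N); last first.
  move=> k _; rewrite /AB /mm !big_distrr -big_split /=.
  by apply: eq_bigr => i _; rewrite mulnDl mulnA [(k * o)%N]mulnC.
rewrite big_split /= sum_nat_const_nat subn0 -big_distrl /= bin2_sum; natlia.
Qed.

Lemma ellw_eq : (ellw p b + pl * CC = 'C(n, 2))%N.
Proof. by rewrite -CC_eq -sumb sumn_bpart; exact: ellw_gen. Qed.

Lemma sumbeta_eq : sumbeta p d lam = (pl * SB)%N.
Proof.
rewrite /sumbeta sum_split_p.
rewrite (eq_big_nat _ _ (F2 := fun _ => SB)); first by rewrite sum_nat_const_nat subn0.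
move=> k _; apply: eq_big_nat => a /andP[a0 _].
by rewrite addnC per_oj.
Qed.

Lemma msize_sq : msize sq = mm.
Proof.
rewrite /sqrtlam msize_take /mm; apply: eq_big_nat => t /andP[t0 tl].
rewrite bpart_block; last by rewrite t0 /= (leq_trans _ (o_le p d lam p_gt0)) // -ltnS.
rewrite /block modn_small //; rewrite prednK //.
by apply: leq_trans (o_le p d lam p_gt0); rewrite -ltnS.
Qed.

Lemma nlam_eq : nlam p d n lam = mm.
Proof. by rewrite /nlam n_eq mulKn // pl_gt0'. Qed.

End NatPart.

Local Open Scope ring_scope.

Lemma natsub (R : pzRingType) (A B C D : nat) :
  (A + D = C + B)%N -> A%:R - B%:R = C%:R - D%:R :> R.
Proof.
move=> h; apply: (addIr (B%:R + D%:R)).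
rewrite addrA subrK [B%:R + _]addrC addrA subrK -!natrD h.
done.
Qed.

Lemma intsub (A B C D : nat) :
  (A + D = C + B)%N -> A%:Z - B%:Z = C%:Z - D%:Z.
Proof. move=> h; have := @natsub int _ _ _ _ h; by rewrite !natz. Qed.

Lemma lemE (K : fieldType) (eps x : K) (pl o u v k : nat) :
  eps ^+ (pl * o) = 1 -> eps != 0 -> (k < pl)%N -> (0 < u <= o)%N -> (0 < v <= o)%N ->
  \prod_(0 <= k' < pl) (if (v + k' * o != u + k * o)%N
                         then eps ^ ((u + k * o)%:Z - (v + k' * o)%:Z) * x - 1 else 1)
  = \prod_(0 <= a < pl | (v == u) ==> (a != 0)%N)
       (eps ^+ (a * o) * (eps ^ (u%:Z - v%:Z) * x) - 1).
Proof.
move=> epl e0 hk /andP[u0 uo] /andP[v0 vo].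
rewrite (@big_cat_nat _ _ _ k.+1) //= [RHS](@big_cat_nat _ _ _ k.+1) //=.
rewrite !(big_mkcond (fun a => (v == u) ==> (a != 0)%N)).
congr (_ * _).
- rewrite big_nat_rev; apply: eq_big_nat => a /andP[_ ha] /=.
  rewrite add0n subSS.
  have hao : ((k - a) * o + a * o = k * o)%N by rewrite -mulnDl subnK // -ltnS.
  have -> : (v + (k - a) * o != u + k * o)%N = ((v == u) ==> (a != 0)%N).
    case: a ha hao => [|a] ha hao.
      by rewrite subn0 eqn_add2r.
    have : (o <= a.+1 * o)%N by rewrite leq_pmull.
    move=> h1; rewrite implybT; move: hao h1.
    move: ((k - a.+1) * o)%N (a.+1 * o)%N => X Y h1 h2; apply/eqP; natlia.
  case: ifP => // _; congr (_ - 1).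
  rewrite mulrA exprnP -expfzDr //; congr (eps ^ _ * _).
  rewrite addrA -PoszD; apply: intsub; natlia.
- rewrite big_nat_rev; apply: eq_big_nat => a /andP[ha1 ha] /=.
  have -> : (k.+1 + pl - a.+1 = k + pl - a)%N by natlia.
  have hao : ((k + pl - a) * o + a * o = k * o + pl * o)%N.
    rewrite -mulnDl subnK ?mulnDl //; natlia.
  have -> : (v + (k + pl - a) * o != u + k * o)%N = ((v == u) ==> (a != 0)%N).
    have : (o <= (k + pl - a) * o)%N by rewrite leq_pmull // subn_gt0; natlia.
    move=> h1; have -> : (a != 0)%N by natlia.
    have h3 := leq_mul ha (leqnn o); rewrite mulSn in h3.
    rewrite implybT; move: h1 hao; move: ((k + pl - a) * o)%N => X h1 h2; apply/eqP; natlia.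
  case: ifP => // _; congr (_ - 1).
  rewrite mulrA exprnP -expfzDr //; congr (_ * _).
  rewrite addrA -PoszD.
  have -> : (u + k * o)%:Z - (v + (k + pl - a) * o)%:Z
          = ((a * o + u)%:Z - v%:Z) + (- (pl * o)%:Z).
    rewrite -[RHS]addrA -opprD -PoszD; apply: intsub; natlia.
  by rewrite expfzDr // -invr_expz -exprnP epl invr1 mulr1.
Qed.

Section Cell.
Variables (K : fieldType) (p d : nat) (eps q : K) (Q : nat -> K) (lam : seq (seq nat)).
Hypothesis p_gt0 : (0 < p)%N.
Hypothesis d_gt0 : (0 < d)%N.
Hypothesis szlam : size lam = (p * d)%N.
Hypothesis epsp : eps ^+ p = 1.
Hypothesis eps0 : eps != 0.
Local Notation o := (olam p d lam).
Local Notation pl := (plam p d lam).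

Lemma pd_eq : (p * d = pl * (d * o))%N.
Proof. by rewrite {1}(p_eq p d lam p_gt0) mulnAC mulnA. Qed.

Lemma size_sqrt : size (sqrtlam p d lam) = (d * o)%N.
Proof.
rewrite /sqrtlam size_take szlam; case: ifP => // /negbT; rewrite -leqNgt => h.
by apply/eqP; rewrite eqn_leq h /= [(d * _)%N]mulnC leq_mul2r (o_le p d lam p_gt0) orbT.
Qed.

Lemma comp_sqrt s : (s <= d * o)%N -> comp (sqrtlam p d lam) s = comp lam s.
Proof.
move=> hs; rewrite /comp /sqrtlam; case: s hs => [|s] hs /=; first by rewrite nth_take // muln_gt0 d_gt0.
by rewrite nth_take.
Qed.

Definition Rst i j s t := q ^ hook (comp lam s) (comp lam t) i j * Q (ds d s) * (Q (ds d t))^-1.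

Lemma hl_split i j s t : hl d eps q Q lam i j s t = eps ^ ((ps d s)%:Z - (ps d t)%:Z) * Rst i j s t.
Proof. by rewrite /hl /Rst !mulrA. Qed.

Lemma hl_shift i j s t k k' : (0 < s <= d * o)%N -> (0 < t <= d * o)%N -> (k < pl)%N -> (k' < pl)%N ->
  hl d eps q Q lam i j (s + k * (d * o)) (t + k' * (d * o))
  = eps ^ ((ps d s + k * o)%:Z - (ps d t + k' * o)%:Z) * Rst i j s t.
Proof.
move=> hs ht hk hk'; rewrite hl_split /Rst.
have /andP[s0 _] := hs; have /andP[t0 _] := ht.
rewrite !ps_shift // !ds_shift // !comp_perk //.
Qed.

Lemma cellF_eq :
  cellprod lam (fun i j s => \prod_(1 <= t < (p * d).+1 | ps d t != ps d s)
                                 (hl d eps q Q lam i j s t - 1))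
  = (cellprod (sqrtlam p d lam) (fun i j s =>
      \prod_(1 <= t < (d * o).+1)
        \prod_(0 <= a < pl | (ps d t == ps d s) ==> (a != 0)%N)
          (eps ^+ (a * o) * hl d eps q Q lam i j s t - 1))) ^+ pl.
Proof.
rewrite /cellprod szlam size_sqrt pd_eq big_blocks.
rewrite -(subn0 pl) -prodr_const_nat subn0.
apply: eq_big_nat => k /andP[_ hk]; apply: eq_big_nat => s /andP[s0 sM].
have hs : (0 < s <= d * o)%N by rewrite s0 -ltnS.
rewrite comp_sqrt; last by rewrite -ltnS.
rewrite comp_perk //.
apply: eq_bigr => i _; apply: eq_bigr => j _.
rewrite big_mkcond big_blocks exchange_big_nat.
apply: eq_big_nat => t /andP[t0 tM].
have ht : (0 < t <= d * o)%N by rewrite t0 -ltnS.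
have /andP[u0 uo] := ps_bound d o s d_gt0 hs.
have /andP[v0 vo] := ps_bound d o t d_gt0 ht.
have epl : eps ^+ (pl * o) = 1 by rewrite -(p_eq p d lam p_gt0).
transitivity (\prod_(0 <= k' < pl) (if (ps d t + k' * o != ps d s + k * o)%N
     then eps ^ ((ps d s + k * o)%:Z - (ps d t + k' * o)%:Z) * Rst i j s t - 1 else 1)).
  apply: eq_big_nat => k' /andP[_ hk'].
  by rewrite !ps_shift // hl_shift.
rewrite lemE //; apply: eq_bigr => a _; by rewrite hl_split.
Qed.

End Cell.

Lemma natsub3 (R : pzRingType) (A B C A' B' : nat) :
  (A + B' = A' + B + C)%N -> A%:R - B%:R - C%:R = A'%:R - B'%:R :> R.
Proof.
move=> h; rewrite -addrA -opprD -natrD; apply: natsub; rewrite h; natlia.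
Qed.

Lemma intrZ (m n : nat) : ((m%:Z - n%:Z)%:~R : rat) = m%:R - n%:R.
Proof. by rewrite intrB. Qed.

Lemma gam_help (A B C k Z1 Z2 : nat) : (0 < k)%N ->
  (A + B + k * Z2 = k * Z1 + C)%N ->
  (A%:R + B%:R - C%:R) / k%:R = (Z1%:Z - Z2%:Z)%:~R :> rat.
Proof.
move=> k0 h; have kn : (k%:R : rat) != 0 by rewrite pnatr_eq0 -lt0n.
apply: (mulIf kn); rewrite divfK // intrZ mulrBl -!natrM -natrD.
apply: natsub; rewrite mulnC [(Z1 * k)%N]mulnC; natlia.
Qed.

Lemma alp_help (m X Y W k Z1 Z2 : nat) : (0 < k)%N ->
  (m * X * k + 2 * k * Z2 = 2 * k * Z1 + m * Y * k + 2 * W)%N ->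
  2%:R^-1 * m%:R * (X%:R - Y%:R) - W%:R / k%:R = (Z1%:Z - Z2%:Z)%:~R :> rat.
Proof.
move=> k0 h; have kn : (k%:R : rat) != 0 by rewrite pnatr_eq0 -lt0n.
have tn : (2%:R : rat) != 0 by rewrite pnatr_eq0.
have kt : ((2 * k)%:R : rat) != 0 by rewrite natrM mulf_neq0.
apply: (mulIf kt); rewrite intrZ mulrBl.
have -> : 2%:R^-1 * m%:R * (X%:R - Y%:R) * (2 * k)%:R = (m * X * k)%:R - (m * Y * k)%:R :> rat.
  rewrite natrM mulrA -[2%:R^-1 * m%:R * _]mulrA [2%:R^-1 * _ * 2%:R]mulrAC mulVf // mul1r.
  by rewrite mulrBr mulrBl !natrM.
have -> : W%:R / k%:R * (2 * k)%:R = (2 * W)%:R :> rat.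
  by rewrite natrM mulrA mulrAC divfK // mulrC natrM.
rewrite mulrBl -!natrM; apply: natsub3; rewrite mulnC [(Z1 * _)%N]mulnC; natlia.
Qed.

Lemma bin2_dbl k : ('C(k, 2) * 2 + k = k * k)%N.
Proof. elim: k => [|k IH] //; rewrite bin2S; natlia. Qed.

Lemma intsub2 (A B E F1 F2 : nat) :
  (A + F2 = F1 + B + E)%N -> - E%:Z + (A%:Z - B%:Z) = F1%:Z - F2%:Z.
Proof.
move=> h; rewrite addrA [- _ + _]addrC -addrA -opprD -PoszD; apply: intsub; rewrite h; natlia.
Qed.

Section Laur.
Variables (K : fieldType) (d : nat) (eps q : K) (Q : nat -> K).
Local Notation L := (inLaurent d eps q Q).

Lemma inL_prod (I : Type) (r : seq I) (P : pred I) (F : I -> K) :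
  (forall i, P i -> L (F i)) -> L (\prod_(i <- r | P i) F i).
Proof. move=> h; apply: big_ind => //; [exact: inL_one | exact: inL_mul]. Qed.

Lemma inL_expn x n : L x -> L (x ^+ n).
Proof.
move=> hx; elim: n => [|n IH]; first by rewrite expr0; exact: inL_one.
by rewrite exprS; apply: inL_mul.
Qed.

Lemma inL_expz x (z : int) : L x -> L x^-1 -> L (x ^ z).
Proof.
move=> hx hxi; case: z => n; first exact: inL_expn.
by rewrite NegzE -exprz_inv -exprnP; apply: inL_expn.
Qed.

Lemma inL_sub1 x : L x -> L (x - 1).
Proof. by move=> hx; apply: inL_add => //; apply: inL_opp; exact: inL_one. Qed.

Lemma inL_Qprod : L (Qprod d Q).
Proof.
rewrite /Qprod big_nat_cond; apply: inL_prod => i /andP[/andP[i1 id] _].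
by apply: inL_Q; rewrite i1 -ltnS.
Qed.

Lemma inL_eps_inv {p} : (0 < p)%N -> eps ^+ p = 1 -> L eps^-1.
Proof.
move=> p0 ep.
have e0 : eps != 0.
  by apply: contra_eq_neq ep => ->; rewrite expr0n; case: p p0 => // p _; rewrite eq_sym oner_eq0.
have -> : eps^-1 = eps ^+ p.-1.
  apply: (mulIf e0); rewrite mulVf // -exprSr prednK //.
exact/inL_expn/inL_eps.
Qed.

Lemma inL_hl p lam i j s t : (0 < d)%N -> (0 < p)%N -> eps ^+ p = 1 ->
  L (hl d eps q Q lam i j s t).
Proof.
move=> d0 p0 ep; have ei := inL_eps_inv p0 ep.
rewrite /hl; apply: inL_mul; [apply: inL_mul; [apply: inL_mul|]|].
- by apply: inL_expz => //; exact: inL_eps.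
- by apply: inL_expz; [exact: inL_q | exact: inL_qinv].
- by apply: inL_Q; rewrite /ds /= ltn_mod.
- by apply: inL_Qinv; rewrite /ds /= ltn_mod.
Qed.
End Laur.

Theorem theorem3p12 (K : fieldType) (p d n : nat) (eps q : K) (Q : nat -> K)
    (b : seq nat) (lam : seq (seq nat)) :
  (1 < p)%N -> (1 <= d)%N -> (3 <= n)%N ->
  [pchar K] =i pred0 ->
  p.-primitive_root eps -> q != 0 -> (forall i, (1 <= i <= d)%N -> Q i != 0) ->
  is_comp p n b -> in_Pdb p d b lam ->
  [/\ gammab p d b lam \is a Num.int,
      alphalam p d n b lam \is a Num.int,
      inLaurent d eps q Q (glam p d n eps q Q b lam) &
      flam p d n eps q Q b lam =
        eps ^ ((((d * olam p d lam * n)%N)%:Z * (1 - (plam p d lam)%:Z)) %/ 2)%Z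
        * glam p d n eps q Q b lam ^+ plam p d lam].
Proof.
move=> p1 d0 _ _ prim _ _ /andP[/eqP szb /eqP sumb] /and3P[/eqP szlam _ hb].
have p0 : (0 < p)%N by apply: ltnW.
have epsp : eps ^+ p = 1 := prim_expr_order prim.
have eps0 : eps != 0.
  by apply: contra_eq_neq epsp => ->; rewrite expr0n; case: p p0 {p1 szb szlam hb prim} => // p _; rewrite eq_sym oner_eq0.
have pe : p = (plam p d lam * olam p d lam)%N := p_eq p d lam p0.
have ne := n_eq p d n b lam p0 szlam szb sumb hb.
have ae := alphab_eq p d n b lam p0 szlam szb sumb hb.
have ee := ellw_eq p d n b lam p0 szlam szb sumb hb.
have se := sumbeta_eq p d lam p0.
have me := msize_sq p d b lam p0 hb.
have nle := nlam_eq p d n b lam p0 szlam szb sumb hb.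
have be := beta_arrow p d lam p0 d0 szlam.
have plg := pl_gt0' p d lam p0.
have cb2 := bin2M (plam p d lam) (mm p d b lam).
have dp := bin2_dbl p.
have dpl := bin2_dbl (plam p d lam).
rewrite ne cb2 in ee; rewrite me in be.
have hg : gammab p d b lam =
   ((plam p d lam * 'C(mm p d b lam, 2) + SB p d lam)%:Z
    - (CC p d b lam + plam p d lam * beta (arrow (sqrtlam p d lam)))%:Z)%:~R.
  rewrite /gammab; apply: gam_help => //; rewrite se be; natlia.
have ha : alphalam p d n b lam =
   ((d * mm p d b lam * 'C(p, 2))%:Z - (d * AB p d b lam)%:Z)%:~R.
  rewrite /alphalam; apply: alp_help => //.
  rewrite nle ae.
  have h1 := congr1 (muln (plam p d lam * d * mm p d b lam)) dp.
  have h2 := congr1 (muln (d * olam p d lam * mm p d b lam)) dpl.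
  have h3 := congr1 (muln (p * d * mm p d b lam * plam p d lam)) pe.
  natlia.
split.
- by rewrite hg intr_int.
- by rewrite ha intr_int.
- rewrite /glam; cbv zeta.
  apply: inL_mul; [apply: inL_mul; [apply: inL_mul|]|].
  + apply: inL_expz; [exact: inL_eps | exact: (@inL_eps_inv K d eps q Q p p0 epsp)].
  + apply: inL_expz; [exact: inL_q | exact: inL_qinv].
  + apply: inL_expn; exact: inL_Qprod.
  + rewrite /cellprod; apply: inL_prod => s _; apply: inL_prod => i _; apply: inL_prod => j _.
    apply: inL_prod => t _; apply: inL_prod => a _; apply: inL_sub1; apply: inL_mul.
      by apply: inL_expn; exact: inL_eps.
    exact: (@inL_hl K d eps q Q p lam i j s t d0 p0 epsp).
- rewrite /flam /glam; cbv zeta.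
  rewrite (@cellF_eq K p d eps q Q lam p0 d0 szlam epsp eps0).
  set CG := cellprod _ _.
  have h2 : q ^ ((ellw p b)%:Z - (beta (arrow lam))%:Z + (sumbeta p d lam)%:Z)
          = (q ^ numq (gammab p d b lam)) ^+ plam p d lam.
    rewrite hg numq_int exprnP exprz_exp mulrBl -!PoszM; congr (q ^ _).
    rewrite addrAC -PoszD; apply: intsub; rewrite se be; natlia.
  have h3 : Qprod d Q ^+ (n * (p - 1)) = (Qprod d Q ^+ (nlam p d n lam * (p - 1))) ^+ plam p d lam.
    by rewrite -exprM nle ne; congr (_ ^+ _); natring.
  have hE : ((((d * olam p d lam * n)%N)%:Z * (1 - (plam p d lam)%:Z)) %/ 2)%Z
            = - ((d * olam p d lam * mm p d b lam * 'C(plam p d lam, 2))%N)%:Z.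
    rewrite (_ : _ * _ = (- ((d * olam p d lam * mm p d b lam * 'C(plam p d lam, 2))%N)%:Z) * 2).
      by rewrite mulzK.
    rewrite mulrBr mulr1 -PoszM mulNr.
    have -> : (2 : int) = 2%:Z by [].
    rewrite -PoszM -[X in _ = X]sub0r.
    have -> : (0 : int) = 0%:Z by [].
    apply: intsub.
    have h4 := congr1 (muln (d * olam p d lam * mm p d b lam)) dpl.
    rewrite ne; natlia.
  have pp : (p * (p - 1) = 'C(p, 2) * 2)%N by rewrite mulnBr muln1; natlia.
  have hh : (p * d * n * (p - 1) = (d * n * 'C(p, 2)).*2)%N.
    rewrite -muln2; transitivity (d * n * (p * (p - 1)))%N; first by natring.
    rewrite pp; natring.
  have h1 : eps ^ (((p * d * n * (p - 1))./2)%:Z - (d * alphab p b)%:Z)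
          = eps ^ ((((d * olam p d lam * n)%N)%:Z * (1 - (plam p d lam)%:Z)) %/ 2)%Z
            * (eps ^ numq (alphalam p d n b lam)) ^+ plam p d lam.
    rewrite ha numq_int exprnP exprz_exp -expfzDr // hE mulrBl -!PoszM hh half_double.
    congr (eps ^ _); apply/esym; apply: intsub2; rewrite ae ne; natlia.
  by rewrite h1 h2 h3 !exprMn !mulrA.
Qed.
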